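(* Let $\mathcal{G}=(G,\odot,\leq)$ be a real continuous Alo-group with $G$ an open interval of $\mathbb{R}$, and let $\tilde A=([a_{ij}^-,a_{ij}^+])$ be an $n\times n$ $[\mathcal{G}]$-reciprocal IPCM. The following are equivalent: (1) $\tilde A$ is $[\mathcal{G}]$-consistent; (2) $a_{ik}^-\odot a_{ik}^+=a_{ij}^-\odot a_{ij}^+\odot a_{jk}^-\odot a_{jk}^+$ for all $i,j,k\in\{1,\dots,n\}$; (3) $a_{ik}^-\odot a_{ik}^+=a_{ij}^-\odot a_{ij}^+\odot a_{jk}^-\odot a_{jk}^+$ for all $i<j<k$.
   Context: An Alo-group $(G,\odot,\leq)$ is an Abelian group with a weak order $\leq$ such that $a\leq b\Rightarrow a\odot c\leq b\odot c$; real means $G\subseteq\mathbb{R}$ with usual order, continuous means $\odot$ is continuous. $[G]=\{[a^-,a^+]: a^-,a^+\in G,\ a^-\leq a^+\}$; $\tilde a^{(-1)}=[(a^+)^{(-1)},(a^-)^{(-1)}]$; $\tilde a\odot_{[G]}\tilde b=\{a\odot b: a\in\tilde a,b\in\tilde b\}$. An IPCM is an $n\times n$ matrix with entries in $[G]$; $[\mathcal{G}]$-reciprocal means $\tilde a_{ji}=\tilde a_{ij}^{(-1)}$ for all $i,j$. $\tilde A$ is $[\mathcal{G}]$-consistent if $\tilde a_{ij}\odot_{[G]}\tilde a_{jk}\odot_{[G]}\tilde a_{ki}=\tilde a_{ik}\odot_{[G]}\tilde a_{kj}\odot_{[G]}\tilde a_{ji}$ for all $i,j,k\in\{1,\dots,n\}$.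 *)

(* Defs.v *)
From Stdlib Require Import Reals Lra.
From Coquelicot Require Import Rbar.
Open Scope R_scope.

(* A real Alo-group: a subset G of R with the usual order, an Abelian group law
   op on G (given as a function R -> R -> R, only relevant on G), a unit and an
   inverse, and order compatibility a <= b -> a op c <= b op c. *)
Record RealAloGroup := {
  carrier : R -> Prop;
  op : R -> R -> R;
  unit : R;
  inv : R -> R;
  op_closed : forall a b, carrier a -> carrier b -> carrier (op a b);
  unit_in : carrier unit;
  inv_closed : forall a, carrier a -> carrier (inv a);
  op_assoc : forall a b c, carrier a -> carrier b -> carrier c ->
    op (op a b) c = op a (op b c);
  op_comm : forall a b, carrier a -> carrier b -> op a b = op b a;
  op_unit : forall a, carrier a -> op a unit = a;
  op_inv : forall a, carrier a -> op a (inv a) = unit;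
  op_mono : forall a b c, carrier a -> carrier b -> carrier c ->
    a <= b -> op a c <= op b c
}.

Definition alo_continuous (G : RealAloGroup) : Prop :=
  forall x y, carrier G x -> carrier G y ->
  forall eps, 0 < eps -> exists delta, 0 < delta /\
    forall x' y', carrier G x' -> carrier G y' ->
      Rabs (x' - x) < delta -> Rabs (y' - y) < delta ->
      Rabs (op G x' y' - op G x y) < eps.

Definition is_open_interval (S : R -> Prop) : Prop :=
  exists a b : Rbar, forall x, S x <-> (Rbar_lt a x /\ Rbar_lt x b).

Definition ival (lo hi : R) : R -> Prop := fun x => lo <= x <= hi.

Definition in_intG (G : RealAloGroup) (lo hi : R) : Prop :=
  carrier G lo /\ carrier G hi /\ lo <= hi.

Definition setop (G : RealAloGroup) (S T : R -> Prop) : R -> Prop :=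
  fun z => exists a b, S a /\ T b /\ z = op G a b.

Definition set_eq (S T : R -> Prop) : Prop := forall x, S x <-> T x.

(* An n x n IPCM is given by lower and upper endpoint matrices lo, hi
   (indices 0..n-1). *)
Definition IPCM (G : RealAloGroup) (n : nat) (lo hi : nat -> nat -> R) : Prop :=
  forall i j, (i < n)%nat -> (j < n)%nat -> in_intG G (lo i j) (hi i j).

(* [G]-reciprocity: a_ji = a_ij^(-1) = [inv a_ij^+, inv a_ij^-] *)
Definition reciprocal (G : RealAloGroup) (n : nat) (lo hi : nat -> nat -> R) : Prop :=
  forall i j, (i < n)%nat -> (j < n)%nat ->
    lo j i = inv G (hi i j) /\ hi j i = inv G (lo i j).

Definition consistent (G : RealAloGroup) (n : nat) (lo hi : nat -> nat -> R) : Prop :=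
  forall i j k, (i < n)%nat -> (j < n)%nat -> (k < n)%nat ->
    set_eq
      (setop G (setop G (ival (lo i j) (hi i j)) (ival (lo j k) (hi j k))) (ival (lo k i) (hi k i)))
      (setop G (setop G (ival (lo i k) (hi i k)) (ival (lo k j) (hi k j))) (ival (lo j i) (hi j i))).

(* Main.v *)
Require Import Defs.
From Stdlib Require Import Reals Lra Arith Lia.
From Coquelicot Require Import Rbar.
Open Scope R_scope.

Section Grp.
Variable G : RealAloGroup.
Local Notation "x <*> y" := (op G x y) (at level 40, left associativity).
Local Notation C := (carrier G).
Local Notation e := (unit G).
Local Notation iv := (inv G).

#[local] Hint Resolve op_closed inv_closed unit_in : grp.

Lemma opA a b c : C a -> C b -> C c -> a <*> b <*> c = a <*> (b <*> c).
Proof. intros; apply op_assoc; auto. Qed.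
Lemma opC a b : C a -> C b -> a <*> b = b <*> a.
Proof. intros; apply op_comm; auto. Qed.
Lemma ope a : C a -> a <*> e = a.
Proof. intros; apply op_unit; auto. Qed.
Lemma eop a : C a -> e <*> a = a.
Proof. intros; rewrite opC by auto with grp; apply ope; auto. Qed.
Lemma opi a : C a -> a <*> iv a = e.
Proof. intros; apply op_inv; auto. Qed.
Lemma iop a : C a -> iv a <*> a = e.
Proof. intros; rewrite opC by auto with grp; apply opi; auto. Qed.

Lemma opCA a b c : C a -> C b -> C c -> a <*> (b <*> c) = b <*> (a <*> c).
Proof. intros. rewrite <- !opA by auto. rewrite (opC a b); auto. Qed.

Lemma cancel_l a b c : C a -> C b -> C c -> a <*> b = a <*> c -> b = c.
Proof.
  intros Ha Hb Hc H.
  rewrite <- (eop b), <- (eop c) by auto.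
  rewrite <- (iop a) by auto.
  rewrite !opA by auto with grp. rewrite H; auto.
Qed.

Lemma inv_uniq a b : C a -> C b -> a <*> b = e -> b = iv a.
Proof. intros Ha Hb H. apply (cancel_l a); auto with grp. rewrite opi; auto. Qed.

Lemma inv_op a b : C a -> C b -> iv (a <*> b) = iv a <*> iv b.
Proof.
  intros. symmetry. apply inv_uniq; auto with grp.
  rewrite opA by auto with grp.
  rewrite (opCA b (iv a)) by auto with grp.
  rewrite (opi b), ope by auto with grp. apply opi; auto.
Qed.

Lemma inv_inv a : C a -> iv (iv a) = a.
Proof. intros. symmetry. apply inv_uniq; auto with grp. apply iop; auto. Qed.

Lemma inv_e : iv e = e.
Proof. symmetry. apply inv_uniq; auto with grp. apply ope; auto with grp. Qed.

Lemma mono_l a b c : C a -> C b -> C c -> a <= b -> a <*> c <= b <*> c.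
Proof. intros; apply op_mono; auto. Qed.
Lemma mono_r a b c : C a -> C b -> C c -> b <= c -> a <*> b <= a <*> c.
Proof. intros. rewrite (opC a b), (opC a c) by auto. apply mono_l; auto. Qed.

Lemma mono3 x y w x' y' w' : C x -> C y -> C w -> C x' -> C y' -> C w' ->
  x <= x' -> y <= y' -> w <= w' -> x <*> y <*> w <= x' <*> y' <*> w'.
Proof.
  intros. apply Rle_trans with (x' <*> y <*> w).
  apply mono_l; auto with grp. apply mono_l; auto.
  apply Rle_trans with (x' <*> y' <*> w).
  apply mono_l; auto with grp. apply mono_r; auto.
  apply mono_r; auto with grp.
Qed.

Lemma inv_anti a b : C a -> C b -> a <= b -> iv b <= iv a.
Proof.
  intros Ha Hb H.
  assert (H1 := mono_l a b (iv a <*> iv b) Ha Hb ltac:(auto with grp) H).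
  rewrite <- opA in H1 by auto with grp. rewrite opi, eop in H1 by auto with grp.
  rewrite opCA, opi, ope in H1 by auto with grp. exact H1.
Qed.

Lemma L1 lo hi t : C lo -> C hi -> C t -> iv hi <= t <= iv lo ->
  lo <= lo <*> hi <*> t <= hi.
Proof.
  intros Hl Hh Ht [H1 H2]. split.
  - apply Rle_trans with (lo <*> hi <*> iv hi).
    right. rewrite opA, opi, ope by auto with grp. auto.
    apply mono_r; auto with grp.
  - apply Rle_trans with (lo <*> hi <*> iv lo).
    apply mono_r; auto with grp.
    right. rewrite (opC lo hi), opA, opi, ope by auto with grp. auto.
Qed.

Lemma L2 lo hi t : C lo -> C hi -> C t -> lo <= t <= hi ->
  iv hi <= iv (lo <*> hi) <*> t <= iv lo.
Proof.
  intros Hl Hh Ht [H1 H2]. rewrite inv_op by auto. split.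
  - apply Rle_trans with (iv lo <*> iv hi <*> lo).
    right. rewrite (opC (iv lo)), opA, iop, ope by auto with grp. auto.
    apply mono_r; auto with grp.
  - apply Rle_trans with (iv lo <*> iv hi <*> hi).
    apply mono_r; auto with grp.
    right. rewrite opA, iop, ope by auto with grp. auto.
Qed.

Lemma L3 P Q S x y w : C P -> C Q -> C S -> C x -> C y -> C w ->
  P <*> Q <*> S = e -> P <*> w <*> (Q <*> y) <*> (S <*> x) = x <*> y <*> w.
Proof.
  intros. rewrite !opA by auto with grp.
  rewrite (opCA w Q) by auto with grp.
  rewrite (opCA y S) by auto with grp.
  rewrite (opCA w S) by auto with grp.
  rewrite <- (opA Q S) by auto with grp.
  rewrite <- (opA P (Q <*> S)) by auto with grp.
  rewrite <- (opA P Q S) by auto with grp. rewrite H5, eop by auto with grp.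
  rewrite (opC y x), (opCA w x), (opC w y) by auto with grp. auto.
Qed.


Lemma conv lo hi t : is_open_interval C -> C lo -> C hi -> lo <= t <= hi -> C t.
Proof.
  intros [l [u Hlu]] Hl Hh Ht. apply Hlu. apply Hlu in Hl. apply Hlu in Hh.
  destruct Hl as [Hl1 _]; destruct Hh as [_ Hh2].
  destruct l, u; simpl in *; try tauto; lra.
Qed.

Lemma ivK x y : C x -> C y -> iv x <*> (x <*> y) = y.
Proof. intros. rewrite <- opA, iop, eop by auto with grp. auto. Qed.

Lemma L4 a A b B d D : C a -> C A -> C b -> C B -> C d -> C D ->
  a <*> b <*> iv D = d <*> iv B <*> iv A -> d <*> D = a <*> A <*> b <*> B.
Proof.
  intros Ha HA Hb HB Hd HD E.
  assert (E2 := f_equal (fun z => z <*> (A <*> B <*> D)) E). simpl in E2.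
  rewrite !opA in E2 by auto with grp.
  rewrite (ivK A), (ivK B) in E2 by auto with grp.
  rewrite (opCA (iv D) A), (opCA (iv D) B), iop, ope in E2 by auto with grp.
  rewrite !opA by auto with grp. rewrite <- E2.
  rewrite (opCA A b) by auto with grp. auto.
Qed.

Lemma E1 S Q : C S -> C Q -> S <*> Q <*> iv Q <*> iv S = e.
Proof.
  intros. rewrite (opA S Q) by auto with grp. rewrite opi, ope by auto with grp.
  apply opi; auto.
Qed.

Lemma E2 P Q : C P -> C Q -> P <*> Q <*> iv (P <*> Q) = e.
Proof. intros. apply opi; auto with grp. Qed.

Lemma cyc a b c : C a -> C b -> C c ->
  iv a <*> c = (iv a <*> b) <*> (iv b <*> c).
Proof.
  intros. rewrite (opA (iv a)) by auto with grp. rewrite <- (opA b) by auto with grp.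
  rewrite opi, eop by auto with grp. auto.
Qed.

End Grp.

Local Notation "x <*> y" := (op _ x y) (at level 40, left associativity).

#[local] Hint Resolve op_closed inv_closed unit_in : grp.

Theorem theorem4 (G : RealAloGroup) (n : nat) (lo hi : nat -> nat -> R)
  (Hcont : alo_continuous G) (Hint : is_open_interval (carrier G))
  (HA : IPCM G n lo hi) (Hrec : reciprocal G n lo hi) :
  (consistent G n lo hi <->
   (forall i j k, (i < n)%nat -> (j < n)%nat -> (k < n)%nat ->
      op G (lo i k) (hi i k) =
      op G (op G (op G (lo i j) (hi i j)) (lo j k)) (hi j k)))
  /\
  ((forall i j k, (i < n)%nat -> (j < n)%nat -> (k < n)%nat ->
      op G (lo i k) (hi i k) =
      op G (op G (op G (lo i j) (hi i j)) (lo j k)) (hi j k)) <->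
   (forall i j k, (i < j)%nat -> (j < k)%nat -> (k < n)%nat ->
      op G (lo i k) (hi i k) =
      op G (op G (op G (lo i j) (hi i j)) (lo j k)) (hi j k))).
Proof.
  assert (Clo : forall x y, (x < n)%nat -> (y < n)%nat -> carrier G (lo x y))
    by (intros x y Hx Hy; apply (HA x y Hx Hy)).
  assert (Chi : forall x y, (x < n)%nat -> (y < n)%nat -> carrier G (hi x y))
    by (intros x y Hx Hy; apply (HA x y Hx Hy)).
  assert (Hle : forall x y, (x < n)%nat -> (y < n)%nat -> lo x y <= hi x y)
    by (intros x y Hx Hy; apply (HA x y Hx Hy)).
  split; [split|split].
  -
    intros Hc i j k Hi Hj Hk.
    destruct (Hrec i k Hi Hk) as [Rki1 Rki2].
    destruct (Hrec j k Hj Hk) as [Rkj1 Rkj2].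
    destruct (Hrec i j Hi Hj) as [Rji1 Rji2].
    assert (Ha := Clo i j Hi Hj). assert (HAA := Chi i j Hi Hj).
    assert (Hb := Clo j k Hj Hk). assert (HB := Chi j k Hj Hk).
    assert (Hd := Clo i k Hi Hk). assert (HD := Chi i k Hi Hk).
    assert (l1 := Hle i j Hi Hj). assert (l2 := Hle j k Hj Hk). assert (l3 := Hle i k Hi Hk).
    assert (i1 := inv_anti G _ _ Ha HAA l1).
    assert (i2 := inv_anti G _ _ Hb HB l2).
    assert (i3 := inv_anti G _ _ Hd HD l3).
    apply L4; auto.
    specialize (Hc i j k Hi Hj Hk).
    unfold set_eq, setop, ival in Hc.
    rewrite Rki1, Rki2, Rkj1, Rkj2, Rji1, Rji2 in Hc.
    apply Rle_antisym.
    + destruct (proj2 (Hc (op G (op G (lo i k) (inv G (hi j k))) (inv G (hi i j)))))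
        as [u [w [[x [y [Hx [Hy Hu]]]] [Hw Hz]]]].
      { exists (op G (lo i k) (inv G (hi j k))), (inv G (hi i j)).
        split; [|split; [lra|auto]].
        exists (lo i k), (inv G (hi j k)). split; [lra|split;[lra|auto]]. }
      subst u. rewrite Hz.
      assert (Cx : carrier G x) by (apply (conv G (lo i j) (hi i j)); auto).
      assert (Cy : carrier G y) by (apply (conv G (lo j k) (hi j k)); auto).
      assert (Cw : carrier G w) by (apply (conv G (inv G (hi i k)) (inv G (lo i k))); auto with grp).
      apply mono3; auto with grp; tauto.
    + destruct (proj1 (Hc (op G (op G (lo i j) (lo j k)) (inv G (hi i k)))))
        as [u [w [[x [y [Hx [Hy Hu]]]] [Hw Hz]]]].
      { exists (op G (lo i j) (lo j k)), (inv G (hi i k)).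
        split; [|split; [lra|auto]].
        exists (lo i j), (lo j k). split; [lra|split;[lra|auto]]. }
      subst u. rewrite Hz.
      assert (Cx : carrier G x) by (apply (conv G (lo i k) (hi i k)); auto).
      assert (Cy : carrier G y) by (apply (conv G (inv G (hi j k)) (inv G (lo j k))); auto with grp).
      assert (Cw : carrier G w) by (apply (conv G (inv G (hi i j)) (inv G (lo i j))); auto with grp).
      apply mono3; auto with grp; tauto.
  -
    intros H2 i j k Hi Hj Hk.
    destruct (Hrec i k Hi Hk) as [Rki1 Rki2].
    destruct (Hrec j k Hj Hk) as [Rkj1 Rkj2].
    destruct (Hrec i j Hi Hj) as [Rji1 Rji2].
    assert (Ha := Clo i j Hi Hj). assert (HAA := Chi i j Hi Hj).
    assert (Hb := Clo j k Hj Hk). assert (HB := Chi j k Hj Hk).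
    assert (Hd := Clo i k Hi Hk). assert (HD := Chi i k Hi Hk).
    assert (l1 := Hle i j Hi Hj). assert (l2 := Hle j k Hj Hk). assert (l3 := Hle i k Hi Hk).
    assert (i1 := inv_anti G _ _ Ha HAA l1).
    assert (i2 := inv_anti G _ _ Hb HB l2).
    assert (i3 := inv_anti G _ _ Hd HD l3).
    specialize (H2 i j k Hi Hj Hk).
    rewrite opA in H2 by auto with grp.
    unfold set_eq, setop, ival.
    rewrite Rki1, Rki2, Rkj1, Rkj2, Rji1, Rji2.
    intro z; split.
    + intros [u [w [[x [y [Hx [Hy Hu]]]] [Hw Hz]]]]. subst u z.
      assert (Cx : carrier G x) by (apply (conv G (lo i j) (hi i j)); auto).
      assert (Cy : carrier G y) by (apply (conv G (lo j k) (hi j k)); auto).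
      assert (Cw : carrier G w) by (apply (conv G (inv G (hi i k)) (inv G (lo i k))); auto with grp).
      exists (op G (op G (op G (lo i k) (hi i k)) w) (op G (inv G (op G (lo j k) (hi j k))) y)),
             (op G (inv G (op G (lo i j) (hi i j))) x).
      split; [|split].
      * eexists; eexists; split; [|split; [|reflexivity]].
        apply L1; auto with grp.
        apply L2; auto with grp.
      * apply L2; auto with grp.
      * symmetry. apply L3; auto with grp.
        rewrite H2. apply E1; auto with grp.
    + intros [u [w [[x [y [Hx [Hy Hu]]]] [Hw Hz]]]]. subst u z.
      assert (Cx : carrier G x) by (apply (conv G (lo i k) (hi i k)); auto).
      assert (Cy : carrier G y) by (apply (conv G (inv G (hi j k)) (inv G (lo j k))); auto with grp).
      assert (Cw : carrier G w) by (apply (conv G (inv G (hi i j)) (inv G (lo i j))); auto with grp).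
      exists (op G (op G (op G (lo i j) (hi i j)) w) (op G (op G (lo j k) (hi j k)) y)),
             (op G (inv G (op G (lo i k) (hi i k))) x).
      split; [|split].
      * eexists; eexists; split; [|split; [|reflexivity]].
        apply L1; auto with grp.
        apply L1; auto with grp.
      * apply L2; auto with grp.
      * symmetry. apply L3; auto with grp.
        rewrite H2. apply E2; auto with grp.
  - intros H2 i j k Hij Hjk Hk. apply H2; lia.
  - intros H3 i j k Hi Hj Hk.
    assert (Hn : (0 < n)%nat) by lia.
    assert (Cc : forall x y, (x < n)%nat -> (y < n)%nat -> carrier G (op G (lo x y) (hi x y)))
      by (intros; auto with grp).
    assert (cii : forall x, (x < n)%nat -> op G (lo x x) (hi x x) = unit G).
    { intros x Hx. destruct (Hrec x x Hx Hx) as [R1 _]. rewrite R1. apply iop; auto. }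
    assert (crev : forall x y, (x < n)%nat -> (y < n)%nat ->
       op G (lo y x) (hi y x) = inv G (op G (lo x y) (hi x y))).
    { intros x y Hx Hy. destruct (Hrec x y Hx Hy) as [R1 R2]. rewrite R1, R2.
      rewrite inv_op by auto. apply opC; auto with grp. }
    assert (H3' : forall x y z, (x < y)%nat -> (y < z)%nat -> (z < n)%nat ->
       op G (lo x z) (hi x z) = op G (op G (lo x y) (hi x y)) (op G (lo y z) (hi y z))).
    { intros x y z Hxy Hyz Hz. assert (x < n)%nat by lia. assert (y < n)%nat by lia. rewrite (H3 x y z) by auto. apply opA; auto with grp. }
    assert (pot : forall x y, (x < n)%nat -> (y < n)%nat ->
       op G (lo x y) (hi x y) = op G (inv G (op G (lo 0%nat x) (hi 0%nat x))) (op G (lo 0%nat y) (hi 0%nat y))).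
    { intros x y Hx Hy. destruct (lt_eq_lt_dec x y) as [[Hxy|Hxy]|Hxy].
      - destruct x as [|x].
        + rewrite cii, inv_e, eop by auto with grp. auto.
        + rewrite (H3' 0%nat (S x) y) by lia. rewrite ivK by auto with grp. auto.
      - subst y. rewrite iop by auto. apply cii; auto.
      - rewrite crev by auto.
        destruct y as [|y].
        + rewrite (cii 0%nat), ope by auto with grp. auto.
        + rewrite (H3' 0%nat (S y) x) by lia.
          rewrite (inv_op G (op G (lo 0%nat (S y)) (hi 0%nat (S y)))) by auto with grp.
          rewrite (opC G (inv G (op G (lo 0%nat (S y)) (hi 0%nat (S y))))) by auto with grp.
          rewrite opA, iop, ope by auto with grp. auto. }
    rewrite opA by auto with grp.
    rewrite (pot i k), (pot i j), (pot j k) by auto.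
    apply cyc; auto with grp.
Qed.
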